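(* For $\theta\in(0,1)$ let $P_\theta$ be the geometric distribution $p_\theta(i)=(1-\theta)\theta^i$, $i\ge 0$, and let $N_\theta^{**}$ be the lengths of a binary prefix code minimizing the maximal pointwise redundancy $R^*(N,P_\theta)=\sup_{i\ge 0}[n(i)+\log_2 p_\theta(i)]$. Then $$\liminf_{\theta\uparrow1}R^*(N_\theta^{**},P_\theta)=1-\log_2\log_2 e,\qquad \limsup_{\theta\uparrow1}R^*(N_\theta^{**},P_\theta)=2-\log_2 e,$$ where $e$ is the base of the natural logarithm.
   Context: A binary prefix code for the nonnegative integers assigns to each $i\ge0$ a codeword in $\{0,1\}^*$ such that no codeword is a prefix of another; $n(i)$ is the length of the codeword for $i$ and $N=\{n(i)\}$. *)

(* Defs.v *)
From HB Require Import structures.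
From mathcomp Require Import all_boot all_order all_algebra.
From mathcomp Require Import all_classical all_reals all_analysis.
Set Implicit Arguments. Unset Strict Implicit. Unset Printing Implicit Defensive.
Import Order.TTheory GRing.Theory Num.Theory.
Import numFieldNormedType.Exports.
Local Open Scope classical_set_scope.
Local Open Scope ring_scope.

Definition log2 {R : realType} (x : R) : R := ln x / ln 2.

Definition is_prefix_code (c : nat -> seq bool) : Prop :=
  forall i j : nat, i <> j -> ~~ prefix (c i) (c j).

Definition prefix_code_lengths (N : nat -> nat) : Prop :=
  exists c : nat -> seq bool, is_prefix_code c /\ forall i, size (c i) = N i.

Definition geom {R : realType} (theta : R) (i : nat) : R := (1 - theta) * theta ^+ i.

Definition Rstar {R : realType} (N : nat -> nat) (p : nat -> R) : \bar R :=
  ereal_sup (range (fun i : nat => ((N i)%:R + log2 (p i))%:E)).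

Definition minimax_code {R : realType} (theta : R) (N : nat -> nat) : Prop :=
  prefix_code_lengths N /\
  forall N', prefix_code_lengths N' -> (Rstar N (geom theta) <= Rstar N' (geom theta))%E.

(* Main.v *)
Require Import Defs.
From HB Require Import structures.
From mathcomp Require Import all_boot all_order all_algebra.
From mathcomp Require Import all_classical all_reals all_analysis.
From mathcomp Require Import zify ring lra.
Import Order.TTheory GRing.Theory Num.Theory.
Import numFieldNormedType.Exports.
Local Open Scope classical_set_scope.
Local Open Scope ring_scope.

Section Kraft.
Variable R : realType.

Lemma kraft_aux (L : nat) : forall (c : nat -> seq bool) (I : seq nat),
  uniq I -> {in I &, forall i j, i <> j -> ~~ prefix (c i) (c j)} ->
  {in I, forall i, size (c i) <= L}%N ->
  \sum_(i <- I) (2^-1 : R) ^+ size (c i) <= 1.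
Proof.
elim: L => [|L IH] c I uI pfI szI.
- case: (boolP (has (fun i => c i == [::]) I)) => [/hasP[i0 i0I /eqP ci0]|hN].
  + rewrite (bigD1_seq i0) //= ci0 expr0 big1_seq ?addr0 // => i /andP[ne iI].
    exfalso; have hne : i0 <> i by move=> e; move: ne; rewrite e eqxx.
    by move: (pfI i0 i i0I iI hne); rewrite ci0 prefix0s.
  + rewrite big1_seq ?ler01 // => i /andP[_ iI]; exfalso.
    move: (szI i iI); rewrite leqn0 => /nilP ci.
    by move/hasPn: hN => /(_ i iI); rewrite ci.
- case: (boolP (has (fun i => c i == [::]) I)) => [/hasP[i0 i0I /eqP ci0]|hN].
  + rewrite (bigD1_seq i0) //= ci0 expr0 big1_seq ?addr0 // => i /andP[ne iI].
    exfalso; have hne : i0 <> i by move=> e; move: ne; rewrite e eqxx.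
    by move: (pfI i0 i i0I iI hne); rewrite ci0 prefix0s.
  have ne0 : {in I, forall i, c i = head false (c i) :: behead (c i)}.
    move=> i iI; case E: (c i) => [|x s] //.
    by move/hasPn: hN => /(_ i iI); rewrite E.
  have claim : forall b, \sum_(i <- I | head false (c i) == b) (2^-1 : R) ^+ size (c i) <= 2^-1.
    move=> b; rewrite -big_filter.
    rewrite big_seq (eq_bigr (fun i => 2^-1 * (2^-1 : R) ^+ size (behead (c i)))); last first.
      move=> i; rewrite mem_filter => /andP[_ iI].
      by rewrite [in LHS](ne0 i iI) /= exprS.
    rewrite -big_seq -mulr_sumr ler_piMr //.
    apply: IH; first by rewrite filter_uniq.
    + move=> i j; rewrite !mem_filter => /andP[/eqP hi iI] /andP[/eqP hj jI] ne.
      have := pfI i j iI jI ne; rewrite (ne0 i iI) (ne0 j jI) hi hj /=.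
      by rewrite eqxx.
    + move=> i; rewrite mem_filter => /andP[_ iI]; rewrite size_behead.
      by have := szI i iI; case: (size (c i)).
  rewrite (bigID (fun i => head false (c i))) /= [X in _ <= X](splitr 1) mul1r; apply: lerD.
  - have := claim true; congr (_ <= _); apply: eq_bigl => i; by rewrite eqb_id.
  - have := claim false; congr (_ <= _); apply: eq_bigl => i; by rewrite eqbF_neg.
Qed.

Lemma kraft (N : nat -> nat) : prefix_code_lengths N ->
  forall m, \sum_(i < m) (2^-1 : R) ^+ N i <= 1.
Proof.
move=> [c [pc sz]] m; rewrite -(big_mkord (fun _ => true) (fun i => (2^-1 : R) ^+ N i)).
under eq_bigr do rewrite -sz.
apply: (@kraft_aux (\sum_(j <- iota 0 m) size (c j))).
- exact: iota_uniq.
- by move=> i j _ _; apply: pc.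
- move=> i iI; rewrite (bigD1_seq i) ?iota_uniq //=; [exact: leq_addr | by move: iI; rewrite /index_iota subn0].
Qed.

End Kraft.

Fixpoint bits (n k : nat) : seq bool :=
  if n is n'.+1 then rcons (bits n' k./2) (odd k) else [::].

Lemma size_bits n k : size (bits n k) = n.
Proof. by elim: n k => [|n IH] k //=; rewrite size_rcons IH. Qed.

Lemma bits_add m d k : bits (m + d) k = bits m (k %/ 2 ^ d) ++ bits d k.
Proof.
elim: d k => [|d IH] k; first by rewrite addn0 expn0 divn1 cats0.
rewrite addnS /= IH -rcons_cat; congr (rcons (_ ++ _) _).
by rewrite expnS divnMA divn2.
Qed.

Lemma bits_inj n x y : (x < 2 ^ n)%N -> (y < 2 ^ n)%N -> bits n x = bits n y -> x = y.
Proof.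
elim: n x y => [|n IH] x y.
  by rewrite expn0 !ltnS !leqn0 => /eqP -> /eqP ->.
move=> hx hy /= /rcons_inj [/IH e eo].
rewrite -(odd_double_half x) -(odd_double_half y) eo e //.
- by rewrite -divn2 ltn_divLR // -expnSr.
- by rewrite -divn2 ltn_divLR // -expnSr.
Qed.

Section Code.
Variable R : realType.
Variable n : nat -> nat.
Hypothesis n_homo : {homo n : x y / (x <= y)%N}.
Hypothesis n_kraft : forall m, \sum_(i < m) (2^-1 : R) ^+ n i <= 1.

Fixpoint K (i : nat) : nat :=
  if i is i'.+1 then ((K i').+1 * 2 ^ (n i'.+1 - n i'))%N else 0%N.

Lemma K_real i : (K i)%:R * (2^-1 : R) ^+ n i = \sum_(l < i) (2^-1 : R) ^+ n l.
Proof.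
elim: i => [|i IH]; first by rewrite big_ord0 mul0r.
rewrite big_ord_recr /= -IH natrM natrX.
have le : (n i <= n i.+1)%N by apply: n_homo.
have e : n i.+1 = (n i + (n i.+1 - n i))%N by rewrite subnKC.
set d := (n i.+1 - n i)%N in e *; rewrite e exprD.
have h2 : (2%:R : R) ^+ d * (2^-1) ^+ d = 1 by rewrite exprVn mulfV // expf_neq0.
rewrite [_ ^+ n i * _]mulrC mulrA -[(_ * 2%:R ^+ d) * _]mulrA h2 mulr1.
by rewrite -natr1 mulrDl mul1r.
Qed.

Lemma K_bound i : ((K i).+1 <= 2 ^ n i)%N.
Proof.
have := n_kraft i.+1; rewrite big_ord_recr /= -K_real -{2}(mul1r ((2^-1 : R) ^+ n i)) -mulrDl.
rewrite exprVn ler_pdivrMr ?exprn_gt0 // mul1r -natrX natr1 ler_nat //.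
Qed.

Lemma K_grow i j : (i < j)%N -> ((K i).+1 * 2 ^ (n j - n i) <= K j)%N.
Proof.
elim: j => [//|j IH]; rewrite ltnS leq_eqVlt => /orP[/eqP ->|lt]; first by [].
have le1 : (n i <= n j)%N by apply: n_homo; apply: ltnW.
have le2 : (n j <= n j.+1)%N by apply: n_homo.
have ee : (n j.+1 - n i = (n j - n i) + (n j.+1 - n j))%N by lia.
rewrite /= ee expnD mulnA.
by apply: leq_mul => //; apply: leq_trans (IH lt) _; apply: leqnSn.
Qed.

Definition code i := bits (n i) (K i).

Lemma code_lt i j : (i < j)%N -> ~~ prefix (code i) (code j).
Proof.
move=> lt; have le : (n i <= n j)%N by apply: n_homo; apply: ltnW.
set d := (n j - n i)%N.
have nj : n j = (n i + d)%N by rewrite subnKC.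
rewrite /code nj bits_add prefixE size_bits take_size_cat ?size_bits //.
apply/negP => /eqP e.
have hq : (K j %/ 2 ^ d < 2 ^ n i)%N.
  by rewrite ltn_divLR ?expn_gt0 // -expnD -nj; exact: K_bound j.
have eq := @bits_inj _ _ _ hq (K_bound i) e.
have g := K_grow i j lt; rewrite -/d in g.
have : ((K i).+1 <= K j %/ 2 ^ d)%N by rewrite leq_divRL ?expn_gt0.
by rewrite eq ltnn.
Qed.

Lemma code_prefix : is_prefix_code code.
Proof.
move=> i j ne; case: (ltngtP i j) => [lt|gt|eq]; first exact: code_lt.
- apply/negP => pij.
  have hs := size_prefix pij; rewrite /code !size_bits in hs.
  have hn : n i = n j by apply/eqP; rewrite eqn_leq hs n_homo // ltnW.
  have : code i = code j.
    move: pij; rewrite prefixE /code hn.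
    by rewrite take_oversize ?size_bits // => /eqP.
  by move=> ec; move: (code_lt j i gt); rewrite ec prefix_refl.
- by move: ne; rewrite eq.
Qed.

Lemma code_lengths : prefix_code_lengths n.
Proof. by exists code; split; [exact: code_prefix | move=> i; rewrite size_bits]. Qed.
End Code.

Set Implicit Arguments. Unset Strict Implicit.
Section Theta.
Variable R : realType.

Definition E2 (x : R) := expR (x * ln 2).
Definition w (y : R) := E2 (- (Num.floor y)%:~R).
Definition aa (th : R) := - log2 th.
Definition bb (th : R) := - log2 (1 - th).
Definition tt (th : R) (i : nat) := bb th + i%:R * aa th.
Definition feasible (th r : R) := forall m, \sum_(i < m) w (r + tt th i) <= 1.
Definition rstar (th : R) := inf [set r | feasible th r].

Lemma ln2_gt0 : 0 < ln (2 : R).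
Proof. by apply: ln_gt0; rewrite ltr1n. Qed.

Lemma E2_gt0 x : 0 < E2 x.
Proof. exact: expR_gt0. Qed.

Lemma E2D x y : E2 (x + y) = E2 x * E2 y.
Proof. by rewrite /E2 mulrDl expRD. Qed.

Lemma E2_nat k : E2 k%:R = 2 ^+ k.
Proof. by rewrite /E2 expRM_natl lnK // posrE. Qed.

Lemma E2N x : E2 (- x) = (E2 x)^-1.
Proof. by rewrite /E2 mulNr expRN. Qed.

Lemma E2_natN k : E2 (- k%:R) = (2^-1) ^+ k.
Proof. by rewrite E2N E2_nat exprVn. Qed.

Lemma E20 : E2 0 = 1.
Proof. by rewrite /E2 mul0r expR0. Qed.

Lemma E21 : E2 1 = 2.
Proof. by have := E2_nat 1; rewrite expr1. Qed.

Lemma ler_E2 x y : (E2 x <= E2 y) = (x <= y).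
Proof. by rewrite /E2 ler_expR ler_pM2r // ln2_gt0. Qed.

Lemma ltr_E2 x y : (E2 x < E2 y) = (x < y).
Proof. by rewrite /E2 ltr_expR ltr_pM2r // ln2_gt0. Qed.

Lemma E2_log2 x : 0 < x -> E2 (log2 x) = x.
Proof.
by move=> x0; rewrite /E2 /log2 mulfVK ?lnK ?posrE // gt_eqF // ln2_gt0.
Qed.

Lemma log2_geom th i : 0 < th < 1 -> log2 (geom th i) = - tt th i.
Proof.
case/andP=> t0 t1; rewrite /log2 /geom /tt /aa /bb /log2.
rewrite lnM ?posrE ?subr_gt0 ?exprn_gt0 // lnXn //.
have := ln2_gt0; rewrite -mulr_natl => h2; field; lra.
Qed.

Lemma aa_gt0 th : 0 < th < 1 -> 0 < aa th.
Proof.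
case/andP=> t0 t1; rewrite /aa /log2 -mulNr divr_gt0 ?ln2_gt0 // oppr_gt0.
by apply: ln_lt0; rewrite t0 t1.
Qed.

Lemma tt_homo th : 0 < th < 1 -> {homo tt th : i j / (i <= j)%N >-> i <= j}.
Proof.
by move=> ht i j ij; rewrite /tt lerD2l ler_pM2r ?aa_gt0 // ler_nat.
Qed.

Lemma E2_bb th : 0 < th < 1 -> E2 (- bb th) = 1 - th.
Proof. by case/andP=> t0 t1; rewrite /bb opprK E2_log2 // subr_gt0. Qed.

Lemma E2_aa th : 0 < th < 1 -> E2 (- aa th) = th.
Proof. by case/andP=> t0 t1; rewrite /aa opprK E2_log2. Qed.

Lemma Rstar_le th N r : 0 < th < 1 ->
  (forall i, (N i)%:R - tt th i <= r) -> (Rstar N (geom th) <= r%:E)%E.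
Proof.
move=> ht h; apply: ge_ereal_sup => _ [i _ <-].
by rewrite lee_fin log2_geom.
Qed.

Lemma Rstar_ge th N r : 0 < th < 1 ->
  (Rstar N (geom th) <= r%:E)%E -> forall i, (N i)%:R - tt th i <= r.
Proof.
move=> ht h i; rewrite -lee_fin -log2_geom //; apply: le_trans h.
by apply: ereal_sup_ubound; exists i.
Qed.

Lemma feas_of_code th N r : 0 < th < 1 -> prefix_code_lengths N ->
  (Rstar N (geom th) <= r%:E)%E -> feasible th r.
Proof.
move=> ht pc hR m; apply: le_trans (@kraft R N pc m).
apply: ler_sum => i _; rewrite /w -E2_natN ler_E2 lerN2.
have := Rstar_ge ht hR i; rewrite lerBlDr addrC => h.
have -> : (N i)%:R = ((N i)%:Z)%:~R :> R by [].
by rewrite ler_int floor_ge_int.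
Qed.

Lemma feas_floor0 th r : feasible th r -> (0 <= Num.floor (r + tt th 0))%R.
Proof.
move=> h; have := h 1%N; rewrite big_ord1 /w => H.
have : E2 (- (Num.floor (r + tt th 0))%:~R) <= E2 0 by rewrite E20.
by rewrite ler_E2 lerNl oppr0 ler0z.
Qed.

Lemma code_of_feas th r : 0 < th < 1 -> feasible th r ->
  exists N, prefix_code_lengths N /\ (Rstar N (geom th) <= r%:E)%E.
Proof.
move=> ht hf.
pose z i := Num.floor (r + tt th i).
have z0 : forall i, (0 <= z i)%R.
  move=> i; apply: le_trans (feas_floor0 hf) _; apply: le_floor.
  by rewrite lerD2l tt_homo.
have zh : {homo z : i j / (i <= j)%N >-> (i <= j)%R}.
  by move=> i j ij; apply: le_floor; rewrite lerD2l tt_homo.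
pose N i := `|z i|%N.
have NE : forall i, (N i)%:Z = z i by move=> i; rewrite gez0_abs.
exists N; split.
- apply: (@code_lengths R).
  + by move=> i j ij; rewrite -lez_nat !NE zh.
  + move=> m; apply: le_trans (hf m); rewrite le_eqVlt; apply/orP; left; apply/eqP.
    apply: eq_bigr => i _; rewrite /w -E2_natN; congr (E2 (- _)).
    by rewrite -/(z i) -NE.
- apply: Rstar_le => // i; rewrite lerBlDr.
  have -> : (N i)%:R = (z i)%:~R :> R by rewrite -NE.
  exact: floor_le.
Qed.

Lemma E2_natM (i : nat) x : E2 (i%:R * x) = E2 x ^+ i.
Proof. by rewrite /E2 -mulrA expRM_natl. Qed.

Lemma E2_tt th i : 0 < th < 1 -> E2 (- tt th i) = (1 - th) * th ^+ i.
Proof.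
by move=> ht; rewrite /tt opprD E2D -mulrN E2_natM E2_bb // E2_aa.
Qed.

Lemma feas1 th : 0 < th < 1 -> feasible th 1.
Proof.
move=> ht m; apply: (@le_trans _ _ (\sum_(i < m) (1 - th) * th ^+ i)).
  apply: ler_sum => i _; rewrite -E2_tt // /w ler_E2 lerN2.
  have h1 : (1%:~R : R) = 1 by [].
  have := floorD1_gt (1 + tt th i); rewrite intrD h1 => h.
  lra.
rewrite -mulr_sumr.
have := subrX1 th m => e.
have -> : (1 - th) * \sum_(i < m) th ^+ i = 1 - th ^+ m.
  by rewrite -opprB mulNr -e opprB.
by rewrite gerBl exprn_ge0 //; case/andP: ht => /ltW.
Qed.

Lemma feas_lb th r : feasible th r -> - bb th <= r.
Proof.
move=> h; have := feas_floor0 h; rewrite floor_ge0 /tt mul0r addr0.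
by rewrite -lerBlDr sub0r.
Qed.

Lemma floor_stable (x : nat -> R) m : exists2 d, 0 < d &
  forall i, (i < m)%N -> forall y, x i <= y < x i + d ->
    Num.floor y = Num.floor (x i).
Proof.
elim: m => [|m [d d0 IH]]; first by exists 1.
pose e := (Num.floor (x m) + 1)%:~R - x m.
have e0 : 0 < e by rewrite /e subr_gt0 floorD1_gt.
exists (Num.min d e); first by rewrite lt_min d0 e0.
move=> i; rewrite ltnS leq_eqVlt => /orP[/eqP ->|im] y /andP[y1 y2].
- apply: floor_def; rewrite (le_trans (floor_le _) y1) /=.
  apply: (lt_le_trans y2); rewrite -lerBrDl ge_min; apply/orP; right.
  by rewrite /e.
- apply: IH => //; rewrite y1 /=; apply: (lt_le_trans y2).
  by rewrite lerD2l ge_min lexx.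
Qed.

Lemma Phi_lb th : has_lbound [set r | feasible th r].
Proof. by exists (- bb th) => r /feas_lb. Qed.

Lemma rstar_le th r : feasible th r -> rstar th <= r.
Proof. by move=> h; apply: (ge_inf (Phi_lb th)). Qed.

Lemma rstar_feas th : 0 < th < 1 -> feasible th (rstar th).
Proof.
move=> ht m.
have [d d0 hd] := floor_stable (fun i => rstar th + tt th i) m.
have hinf : has_inf [set r | feasible th r].
  by split; [exists 1; exact: feas1 | exact: Phi_lb].
have [r hr rlt] := inf_adherent d0 hinf.
have rge : rstar th <= r by apply: rstar_le.
apply: le_trans (hr m); rewrite le_eqVlt; apply/orP; left; apply/eqP.
apply: eq_bigr => i _; rewrite /w; congr (E2 (- _%:~R)); symmetry.
apply: (hd i (ltn_ord i)); rewrite lerD2r rge /=.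
by rewrite addrAC ltrD2r.
Qed.

Lemma rstar_lower th N : 0 < th < 1 -> prefix_code_lengths N ->
  ((rstar th)%:E <= Rstar N (geom th))%E.
Proof.
move=> ht pc; case E: (Rstar N (geom th)) => [x| |] //.
- by rewrite lee_fin; apply: rstar_le; apply: (feas_of_code ht pc); rewrite E.
- by rewrite leey.
- exfalso; have : feasible th (rstar th - 1) by apply: (feas_of_code ht pc); rewrite E leNye.
  by move=> /rstar_le h; lra.
Qed.

Lemma minimax_exists (th : R) : 0 < th < 1 -> exists N, minimax_code th N.
Proof.
move=> ht; have [N [pc hN]] := code_of_feas ht (rstar_feas ht).
exists N; split => // N' pc'; apply: le_trans hN _; exact: rstar_lower.
Qed.

Lemma minimax_val (th : R) N : 0 < th < 1 -> minimax_code th N ->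
  Rstar N (geom th) = (rstar th)%:E.
Proof.
move=> ht [pc hmin]; apply/eqP; rewrite eq_le rstar_lower // andbT.
have [N0 [pc0 hN0]] := code_of_feas ht (rstar_feas ht).
exact: le_trans (hmin N0 pc0) hN0.
Qed.

End Theta.

Set Implicit Arguments. Unset Strict Implicit.
Section GG.
Variable R : realType.

Definition fl (y : R) : R := (Num.floor y)%:~R.
Definition G (y : R) := w y * (2 - (y - fl y)).

Lemma w_fl y : w y = E2 (- fl y).
Proof. by []. Qed.

Lemma fl_itv y : fl y <= y < fl y + 1.
Proof.
by rewrite /fl floor_le /= -[1]/(1%:~R : R) -intrD floorD1_gt.
Qed.

Lemma G_gt0 y : 0 < G y.
Proof.
rewrite /G mulr_gt0 ?E2_gt0 //; have := fl_itv y; lra.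
Qed.

Lemma G1 (a y : R) : 0 < a <= 1 ->
  a * w y <= G (y - a) - G y /\ G (y - a) - G y <= a * w (y - a).
Proof.
move=> /andP[a0 a1].
have k1 : (Num.floor y - 1 <= Num.floor (y - a))%R.
  rewrite floor_ge_int intrB; have := fl_itv y; rewrite /fl; lra.
have k2 : (Num.floor (y - a) <= Num.floor y)%R.
  by apply: le_floor; lra.
have [e|e] : Num.floor (y - a) = Num.floor y \/ Num.floor (y - a) = Num.floor y - 1 by lia.
- have ew : w (y - a) = w y by rewrite /w e.
  have eG : G (y - a) - G y = a * w y by rewrite /G ew /fl e; ring.
  by rewrite ew eG lexx.
- have ew : w (y - a) = 2 * w y.
    by rewrite /w e intrB opprB E2D; congr (_ * _); exact: E21.
  have eG : G (y - a) - G y = w y * (2 * a - (y - fl y)).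
    by rewrite /G ew /fl e intrB; ring.
  have W0 : 0 < w y by apply: E2_gt0.
  have h1 : y - a < fl y.
    have := fl_itv (y - a); rewrite /fl e intrB; lra.
  have h2 := fl_itv y.
  rewrite eG ew; split; nra.
Qed.

Lemma tel (u : nat -> R) m : \sum_(i < m) (u i - u i.+1) = u 0%N - u m.
Proof.
elim: m => [|m IH]; first by rewrite big_ord0 subrr.
by rewrite big_ord_recr /= IH; ring.
Qed.

Lemma pow_small (q e : R) : 0 <= q < 1 -> 0 < e -> exists m, q ^+ m < e.
Proof.
move=> /andP[q0 q1] e0.
have h : `|q| < 1 by rewrite ger0_norm.
have := cvgr_lt _ (cvg_expr h) _ e0.
case=> N _ hN; exists N; exact: hN N (leqnn N).
Qed.

Lemma G_le2w (y : R) : G y <= 2 * w y.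
Proof.
rewrite /G mulrC ler_pM2r ?E2_gt0 //; have := fl_itv y; lra.
Qed.

Lemma w_le (y : R) : w y <= E2 (1 - y).
Proof. rewrite /w ler_E2; have := fl_itv y; rewrite /fl; lra. Qed.

Lemma Lo (a c : R) : 0 < a <= 1 ->
  (forall m, \sum_(i < m) w (c + i%:R * a) <= 1) -> G c <= a.
Proof.
move=> ha hs; have a0 : 0 < a by case/andP: ha.
pose u i := G (c + i%:R * a).
have step i : u i - u i.+1 <= a * w (c + i%:R * a).
  have := (G1 (c + i.+1%:R * a) ha).2.
  have -> : c + i.+1%:R * a - a = c + i%:R * a by rewrite -natr1; ring.
  by [].
have hm m : G c <= a + 4 * E2 (- c) * E2 (- a) ^+ m.
  have t := tel u m.
  have s1 : \sum_(i < m) (u i - u i.+1) <= a * \sum_(i < m) w (c + i%:R * a).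
    by rewrite mulr_sumr; apply: ler_sum => i _; apply: step.
  have s2 : a * \sum_(i < m) w (c + i%:R * a) <= a by have := hs m; nra.
  have u0 : u 0%N = G c by rewrite /u mul0r addr0.
  have um : u m <= 4 * E2 (- c) * E2 (- a) ^+ m.
    apply: le_trans (G_le2w _) _.
    have -> : 4 * E2 (- c) * E2 (- a) ^+ m = 2 * E2 (1 - (c + m%:R * a)).
      have -> : 1 - (c + m%:R * a) = 1 + (- c + m%:R * - a) by ring.
      by rewrite -E2_natM !E2D E21; ring.
    by rewrite ler_pM2l // w_le.
  rewrite -u0; lra.
rewrite leNgt; apply/negP => gt.
have E0 : 0 < 4 * E2 (- c) by rewrite mulr_gt0 ?E2_gt0.
have q01 : 0 <= E2 (- a) < 1.
  by rewrite (ltW (E2_gt0 _)) /= -E20 ltr_E2 oppr_lt0.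
have e0 : 0 < (G c - a) / (4 * E2 (- c)) by rewrite divr_gt0 // subr_gt0.
have [m hq] := pow_small q01 e0.
have : 4 * E2 (- c) * E2 (- a) ^+ m < G c - a.
  by rewrite -ltr_pdivlMl // mulrC.
have := hm m; lra.
Qed.

Lemma Up (a c : R) : 0 < a <= 1 -> G (c - a) <= a ->
  forall m, \sum_(i < m) w (c + i%:R * a) <= 1.
Proof.
move=> ha hG m; have a0 : 0 < a by case/andP: ha.
pose v i := G (c + i%:R * a - a).
have step i : a * w (c + i%:R * a) <= v i - v i.+1.
  rewrite /v; have -> : c + i.+1%:R * a - a = c + i%:R * a by rewrite -natr1; ring.
  exact: (G1 (c + i%:R * a) ha).1.
have s1 : a * \sum_(i < m) w (c + i%:R * a) <= v 0%N - v m.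
  by rewrite -tel mulr_sumr; apply: ler_sum => i _; apply: step.
have v0 : v 0%N = G (c - a) by rewrite /v mul0r addr0.
have vm : 0 < v m by apply: G_gt0.
have : a * \sum_(i < m) w (c + i%:R * a) <= a * 1 by rewrite mulr1; lra.
by rewrite ler_pM2l.
Qed.

End GG.

Set Implicit Arguments. Unset Strict Implicit.
Section Asym.
Variable R : realType.
Local Notation l2 := (ln (2 : R)).

Lemma l2_lt1 : l2 < 1.
Proof.
rewrite -[X in _ < X](expRK (1 : R)) ltr_ln ?posrE ?expR_gt0 //.
by have := @expR_gt1Dx R 1 (oner_neq0 _); rewrite (_ : 1 + 1 = 2) //.
Qed.

Lemma l2_gt12 : 2^-1 < l2.
Proof.
have h : 1 - 2^-1 < expR (- 2^-1 : R).
  by apply: expR_gt1Dx; rewrite oppr_eq0 invr_eq0.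
have h2 : expR (2^-1 : R) < 2.
  have -> : expR (2^-1 : R) = (expR (- 2^-1))^-1 by rewrite expRN invrK.
  rewrite invf_plt ?posrE ?expR_gt0 //.
  by apply: le_lt_trans h; lra.
by move: h2; rewrite -[X in _ < X](@lnK R 2) ?posrE // ltr_expR.
Qed.

Lemma ln_E2 (x : R) : ln (E2 x) = x * l2.
Proof. exact: expRK. Qed.

Lemma log2_E2 (x : R) : log2 (E2 x) = x.
Proof. by rewrite /log2 ln_E2 mulfK // gt_eqF // ln2_gt0. Qed.

Lemma aa_E2 (a : R) : aa (E2 (- a)) = a.
Proof. by rewrite /aa log2_E2 opprK. Qed.

Lemma lnle (x : R) : 0 < x -> ln x <= x - 1.
Proof. by move=> x0; have := expR_ge1Dx (ln x); rewrite lnK ?posrE //; lra. Qed.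

Lemma D1 (th : R) : 0 < th < 1 -> ln (1 - th) <= ln (- ln th).
Proof.
case/andP=> t0 t1; have lt0 : ln th < 0 by apply: ln_lt0; rewrite t0 t1.
rewrite ler_ln ?posrE ?subr_gt0 ?oppr_gt0 //.
by have := lnle t0; lra.
Qed.

Lemma D2 (th : R) : 0 < th < 1 -> ln th <= ln (1 - th) - ln (- ln th).
Proof.
case/andP=> t0 t1; have lt0 : ln th < 0 by apply: ln_lt0; rewrite t0 t1.
have h : - ln th <= (1 - th) / th.
  have hi : 0 < th^-1 by rewrite invr_gt0.
  have := lnle hi; rewrite lnV ?posrE // => h.
  by rewrite mulrBl divff ?gt_eqF // mul1r.
have : ln (- ln th) <= ln ((1 - th) / th).
  by rewrite ler_ln ?posrE ?divr_gt0 ?subr_gt0 ?oppr_gt0.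
rewrite ln_div ?posrE ?subr_gt0 //; lra.
Qed.

Lemma Cc (f : R) : 0 <= f <= 1 -> l2 - f * l2 <= ln (2 - f).
Proof.
case/andP=> f0 f1.
have := @concave_ln R (Itv01 (eqbRL (subr_ge0 _ _) f1) (eqbRL (gerBl _ _) f0)) 2 1 (ltr0Sn _ 1) ltr01.
rewrite !convRE /= /unstable.onem ln1 mulr0 addr0.
have -> : (1 - f) * 2 + (1 - (1 - f)) * 1 = 2 - f by ring.
by rewrite mulrBl mul1r.
Qed.

Lemma l2_gt0 : 0 < l2. Proof. exact: ln2_gt0. Qed.
Lemma l2_neq0 : l2 != 0. Proof. by rewrite gt_eqF // l2_gt0. Qed.
Lemma inv_l2_lt2 : l2^-1 < 2.
Proof.
by rewrite invf_plt ?posrE ?l2_gt0 // l2_gt12.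
Qed.
Lemma inv_l2_gt1 : 1 < l2^-1.
Proof. by rewrite invf_gt1 ?l2_gt0 // l2_lt1. Qed.

Lemma aaE (th : R) : aa th = - ln th / l2.
Proof. by rewrite /aa /log2 mulNr. Qed.
Lemma bbE (th : R) : bb th = - ln (1 - th) / l2.
Proof. by rewrite /bb /log2 mulNr. Qed.

Lemma ln_aa (th : R) : 0 < th < 1 -> ln (aa th) = ln (- ln th) - ln l2.
Proof.
case/andP=> t0 t1; have lt0 : ln th < 0 by apply: ln_lt0; rewrite t0 t1.
by rewrite aaE ln_div ?posrE ?oppr_gt0 ?l2_gt0.
Qed.

Lemma tt_shift (th r : R) i : r + tt th i = (r + bb th) + i%:R * aa th.
Proof. by rewrite /tt addrA. Qed.

Lemma Lo_th (th : R) : 0 < th < 1 -> aa th <= 1 -> G (rstar th + bb th) <= aa th.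
Proof.
move=> ht a1; apply: Lo; first by rewrite aa_gt0.
by move=> m; have := rstar_feas ht m; under eq_bigr do rewrite tt_shift.
Qed.

Lemma Up_th (th c : R) : 0 < th < 1 -> aa th <= 1 -> G (c - aa th) <= aa th ->
  rstar th <= c - bb th.
Proof.
move=> ht a1 hG; apply: rstar_le => m.
under eq_bigr do rewrite tt_shift subrK.
by apply: Up => //; rewrite aa_gt0.
Qed.

Lemma Lc_eq : 1 - log2 (log2 (expR 1 : R)) = 1 + ln l2 / l2.
Proof.
rewrite /log2 expRK mul1r lnV ?posrE ?l2_gt0 //.
by rewrite mulNr opprK.
Qed.

Lemma Uc_eq : 2 - log2 (expR 1 : R) = 2 - l2^-1.
Proof. by rewrite /log2 expRK mul1r. Qed.

Lemma P1lo (th : R) : 0 < th < 1 -> aa th <= 1 ->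
  1 + ln l2 / l2 - aa th <= rstar th.
Proof.
move=> ht a1; have a0 := aa_gt0 ht.
have hG := Lo_th ht a1.
set c := rstar th + bb th in hG.
set F := fl c.
have hf : F <= c < F + 1 by apply: fl_itv.
have f2 : 0 < 2 - (c - F) by lra.
have hl : ln (G c) <= ln (aa th) by rewrite ler_ln ?posrE ?G_gt0.
rewrite /G w_fl lnM ?posrE ?E2_gt0 // ln_E2 ln_aa // -/F in hl.
have C := @Cc (c - F) ltac:(lra).
have D := D2 ht.
have key1 : l2 * (1 + ln l2 / l2 - aa th) = l2 + ln l2 + ln th.
  by rewrite aaE; field; apply: l2_neq0.
have key2 : l2 * rstar th = c * l2 + ln (1 - th).
  by rewrite /c bbE; field; apply: l2_neq0.
rewrite -(ler_pM2l l2_gt0) key1 key2.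
rewrite mulrBl mulNr in C hl.
lra.
Qed.

Lemma P1hi (th : R) : 0 < th < 1 -> aa th <= 1 ->
  rstar th <= 2 - l2^-1 + aa th.
Proof.
move=> ht a1; have a0 := aa_gt0 ht.
set a := aa th in a0 a1 *.
set k := (Num.floor (log2 a^-1) + 1)%R.
set K : R := k%:~R.
have hK1 : log2 a^-1 < K by rewrite /K /k floorD1_gt.
have hK2 : K <= log2 a^-1 + 1.
  by rewrite /K /k intrD lerD2r floor_le.
have ai0 : 0 < a^-1 by rewrite invr_gt0.
have e1 : a^-1 < E2 K by rewrite -[X in X < _](E2_log2 ai0) ltr_E2.
have e2 : E2 K <= a^-1 * 2.
  by rewrite -(E2_log2 ai0) -E21 -E2D ler_E2.
set s := a * E2 K.
have an0 : a != 0 by rewrite gt_eqF.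
have s1 : 1 < s by rewrite /s -(divff an0) ltr_pM2l.
have s2 : s <= 2 by have := e2; rewrite -(ler_pM2l a0) mulrA divff // mul1r.
have hc : G (K + (2 - s) + a - a) <= a.
  have -> : K + (2 - s) + a - a = K + (2 - s) by ring.
  have ef : fl (K + (2 - s)) = K.
    rewrite /fl (@floor_def _ _ k) // /K intrD; apply/andP; split; lra.
  rewrite /G w_fl ef.
  have -> : 2 - (K + (2 - s) - K) = s by ring.
  by rewrite /s mulrCA -E2D addNr E20 mulr1.
have hr := Up_th ht a1 hc.
have Ds := D1 ht.
have sl : 0 < s * l2 by rewrite mulr_gt0 ?l2_gt0 //; lra.
have M := lnle sl.
have lns : ln s = ln a + K * l2 by rewrite /s lnM ?posrE ?E2_gt0 // ln_E2.
rewrite lnM ?posrE ?l2_gt0 // in M; last by lra.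
rewrite /a ln_aa // in lns.
have : (K - bb th) * l2 <= (s - l2^-1) * l2.
  have -> : (K - bb th) * l2 = K * l2 + ln (1 - th) by rewrite bbE; field; apply: l2_neq0.
  have -> : (s - l2^-1) * l2 = s * l2 - 1 by field; apply: l2_neq0.
  lra.
rewrite ler_pM2r ?l2_gt0 // => h.
lra.
Qed.

Lemma near1 (a : R) : 0 < a -> 1 - a <= E2 (- a).
Proof.
move=> a0; have := expR_ge1Dx (- a * l2); rewrite -/(E2 (- a)).
have := l2_lt1; have := l2_gt0; nra.
Qed.

Lemma th_in (a : R) : 0 < a -> 0 < E2 (- a) < 1.
Proof. by move=> a0; rewrite E2_gt0 /= -E20 ltr_E2 oppr_lt0. Qed.

Lemma P2 (k : nat) : (1 <= k)%N ->
  rstar (E2 (- E2 (1 - k%:R))) <= 1 + ln l2 / l2 + E2 (1 - k%:R).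
Proof.
move=> k1; set a := E2 (1 - k%:R); set th := E2 (- a).
have a0 : 0 < a by apply: E2_gt0.
have kk : (1 : R) <= k%:R by rewrite ler1n.
have a1 : a <= 1 by rewrite /a -[X in _ <= X]E20 ler_E2; lra.
have ht : 0 < th < 1 by apply: th_in.
have ha : aa th = a by rewrite /th aa_E2.
have hc : G (k%:R + a - aa th) <= aa th.
  rewrite ha addrK.
  have ef : fl (k%:R : R) = k%:R.
    by rewrite /fl (@floor_def _ _ k%:Z) // intrD lexx /= ltrDl.
  rewrite /G w_fl ef subrr subr0.
  by rewrite /a -E21 -E2D addrC.
have a1' : aa th <= 1 by rewrite ha.
have hr := Up_th ht a1' hc.
have D := D1 ht.
have lnth : ln th = - a * l2 by rewrite /th ln_E2.
have lna : ln a = (1 - k%:R) * l2 by rewrite /a ln_E2.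
rewrite lnth mulNr opprK lnM ?posrE ?l2_gt0 // lna mulrBl mul1r in D.
have : (k%:R - bb th) * l2 <= (1 + ln l2 / l2) * l2.
  rewrite (_ : (k%:R - bb th) * l2 = k%:R * l2 + ln (1 - th)); last first.
    by rewrite bbE; field; apply: l2_neq0.
  rewrite (_ : (1 + ln l2 / l2) * l2 = l2 + ln l2); last by field; apply: l2_neq0.
  lra.
rewrite ler_pM2r ?l2_gt0 // => h; lra.
Qed.


Lemma P3 (K : nat) : (1 <= K)%N ->
  2 - l2^-1 - E2 (- K%:R) / l2 <= rstar (E2 (- (E2 (- K%:R) / l2))).
Proof.
move=> K1; set e := E2 (- K%:R); set a := e / l2; set th := E2 (- a).
have e0 : 0 < e by apply: E2_gt0.
have a0 : 0 < a by rewrite divr_gt0 ?l2_gt0.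
have kk : (1 : R) <= K%:R by rewrite ler1n.
have eh : e <= 2^-1.
  by rewrite /e -[X in _ <= X](expr1 (2^-1 : R)) -E2_natN ler_E2 lerN2 ler_nat.
have a1 : a <= 1.
  rewrite /a ler_pdivrMr ?l2_gt0 // mul1r; have := l2_gt12; lra.
have ht : 0 < th < 1 by apply: th_in.
have ha : aa th = a by rewrite /th aa_E2.
have a1' : aa th <= 1 by rewrite ha.
have hG := Lo_th ht a1'; rewrite ha in hG.
set c := rstar th + bb th in hG.
set j := Num.floor c; set J : R := j%:~R.
have hJ : J <= c < J + 1 by apply: fl_itv.
have hGc : G c = E2 (- J) * (2 - (c - J)) by [].
have il2 := inv_l2_lt2; have il1 := inv_l2_gt1.
have claim : K%:R + 2 - l2^-1 <= c.
  have [h|[h|h]] : (j <= K%:Z - 1 \/ j = K%:Z \/ K%:Z + 1 <= j)%R by lia.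
  - exfalso.
    have hJK : J <= K%:R - 1.
      by rewrite /J -[K%:R]/((K%:Z)%:~R : R) -[1]/(1%:~R : R) -intrB ler_int.
    have eJ : e * 2 <= E2 (- J).
      by rewrite /e -E21 -E2D ler_E2; lra.
    have EJ0 : 0 < E2 (- J) by apply: E2_gt0.
    have p1 : E2 (- J) < E2 (- J) * (2 - (c - J)) by rewrite ltr_pMr //; lra.
    have p2 : e * l2^-1 < e * 2 by rewrite ltr_pM2l.
    move: hG; rewrite hGc /a; lra.
  - have hJK : J = K%:R by rewrite /J h.
    move: hG; rewrite hGc hJK -/e /a ler_pM2l //; lra.
  - have hJK : K%:R + 1 <= J.
      by rewrite /J -[K%:R]/((K%:Z)%:~R : R) -[1]/(1%:~R : R) -intrD ler_int.
    lra.
have D := D2 ht.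
have lnth : ln th = - e by rewrite /th ln_E2 /a mulNr divfK ?l2_neq0.
have lne : ln e = - K%:R * l2 by rewrite /e ln_E2.
rewrite lnth opprK lne in D.
have : (- a) * l2 <= (K%:R - bb th) * l2.
  rewrite (_ : (K%:R - bb th) * l2 = K%:R * l2 + ln (1 - th)); last first.
    by rewrite bbE; field; apply: l2_neq0.
  rewrite (_ : - a * l2 = - e); last by rewrite /a mulNr divfK ?l2_neq0.
  rewrite mulNr in D; lra.
rewrite ler_pM2r ?l2_gt0 // => h.
have -> : rstar th = c - bb th by rewrite /c addrK.
lra.
Qed.

End Asym.


Set Implicit Arguments. Unset Strict Implicit.
Section Fin.
Variable R : realType.
Local Notation l2 := (ln (2 : R)).

Lemma setV (x0 : R) : x0 < 1 -> (1 : R)^'- [set th | x0 < th < 1].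
Proof.
move=> x1; apply: (filterS2 _ _ (nbhs_left_gt x1) (nbhs_left_lt 1)).
by move=> x h1 h2; apply/andP.
Qed.

Lemma inV (V : set R) : (1 : R)^'- V ->
  exists2 d, 0 < d & forall th, 1 - d < th < 1 -> V th.
Proof.
move=> /nbhs_ballP [d d0 hd]; exists d => // th /andP[t1 t2].
apply: hd => //; rewrite -ball_normE /ball_ /= ger0_norm; lra.
Qed.

Lemma aa_small (d th : R) : 0 < d -> E2 (- d) < th < 1 -> aa th < d.
Proof.
move=> d0 /andP[t1 t2]; have t0 : 0 < th by apply: lt_trans t1; apply: E2_gt0.
rewrite /aa ltrNl -(ltr_E2 (- d)) E2_log2 //.
Qed.

Lemma small_nat (eta : R) : 0 < eta -> exists k, (1 <= k)%N /\ E2 (1 - k%:R) < eta.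
Proof.
move=> e0; have q : 0 <= (2^-1 : R) < 1.
  by rewrite invr_ge0 ler0n /= invf_lt1 // ltr1n.
have [m hm] := pow_small q e0.
exists m.+1; split => //.
have -> : 1 - m.+1%:R = - m%:R :> R by rewrite -natr1; ring.
by rewrite E2_natN.
Qed.

End Fin.

Unset Implicit Arguments.

Theorem mainTheorem7 (R : realType) :
  (forall theta : R, 0 < theta < 1 -> exists N, minimax_code theta N) /\
  (forall Nss : R -> nat -> nat,
     (forall theta : R, 0 < theta < 1 -> minimax_code theta (Nss theta)) ->
     limf_einf (fun theta : R => Rstar (Nss theta) (geom theta)) (1 : R)^'-
       = (1 - log2 (log2 (expR (1 : R))))%:E /\
     limf_esup (fun theta : R => Rstar (Nss theta) (geom theta)) (1 : R)^'-
       = (2 - log2 (expR (1 : R)))%:E).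
Proof.
split; first by move=> th ht; apply: minimax_exists.
move=> Nss hN.
set g := fun theta : R => Rstar (Nss theta) (geom theta).
have hg : forall th, 0 < th < 1 -> g th = (rstar th)%:E.
  by move=> th ht; apply: minimax_val (hN th ht).
rewrite Lc_eq Uc_eq.
have l2i1 := @inv_l2_gt1 R.
split.
- rewrite limf_einfE; apply/eqP; rewrite eq_le; apply/andP; split.
  + apply: ge_ereal_sup => _ [V FV <-].
    apply/lee_addgt0Pr => e e0.
    have [d d0 hd] := inV FV.
    have m0 : 0 < Num.min d e by rewrite lt_min d0 e0.
    have [k [k1 hk]] := small_nat m0.
    move: hk; set a := E2 (1 - k%:R) => hk.
    have a0 : 0 < a by apply: E2_gt0.
    move: hk; rewrite lt_min => /andP[ad ae].
    set th := E2 (- a).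
    have ht : 0 < th < 1 by apply: th_in.
    have Vth : V th.
      apply: hd; have := near1 a0; rewrite -/th; move: ht => /andP[_ t1].
      by move=> h; apply/andP; split => //; lra.
    apply: (@le_trans _ _ (g th)); first by apply: ereal_inf_lbound; exists th.
    rewrite hg // -EFinD lee_fin; have := @P2 R k k1; rewrite -/a -/th; lra.
  + apply/lee_subgt0Pr => e e0.
    set d := Num.min e 1.
    have d0 : 0 < d by rewrite lt_min e0 ltr01.
    have dx : E2 (- d) < 1 by rewrite -[X in _ < X](E20 R) ltr_E2 oppr_lt0.
    have FV := setV dx.
    apply: le_ereal_sup_tmp.
    exists (ereal_inf (g @` [set th | E2 (- d) < th < 1])); first by exists [set th | E2 (- d) < th < 1].
    apply: le_ereal_inf_tmp => _ [th hth <-].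
    have ht : 0 < th < 1.
      move: hth => /andP[h1 h2]; apply/andP; split => //.
      by apply: lt_trans h1; apply: E2_gt0.
    have aas := aa_small d0 hth.
    have dle : d <= e /\ d <= 1 by split; rewrite ge_min lexx ?orbT.
    have a1 : aa th <= 1 by lra.
    rewrite hg // -EFinB lee_fin; have := P1lo ht a1; lra.
- rewrite limf_esupE; apply/eqP; rewrite eq_le; apply/andP; split.
  + apply/lee_addgt0Pr => e e0.
    set d := Num.min e 1.
    have d0 : 0 < d by rewrite lt_min e0 ltr01.
    have dx : E2 (- d) < 1 by rewrite -[X in _ < X](E20 R) ltr_E2 oppr_lt0.
    have FV := setV dx.
    apply: ge_ereal_inf.
    exists (ereal_sup (g @` [set th | E2 (- d) < th < 1])); first by exists [set th | E2 (- d) < th < 1].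
    apply: ge_ereal_sup => _ [th hth <-].
    have ht : 0 < th < 1.
      move: hth => /andP[h1 h2]; apply/andP; split => //.
      by apply: lt_trans h1; apply: E2_gt0.
    have aas := aa_small d0 hth.
    have dle : d <= e /\ d <= 1 by split; rewrite ge_min lexx ?orbT.
    have a1 : aa th <= 1 by lra.
    rewrite hg // -EFinD lee_fin; have := P1hi ht a1; lra.
  + apply: le_ereal_inf_tmp => _ [V FV <-].
    apply/lee_subgt0Pr => e e0.
    have [d d0 hd] := inV FV.
    have m0 : 0 < Num.min d e * ln 2 by rewrite mulr_gt0 ?ln2_gt0 // lt_min d0 e0.
    have [k [k1 hk]] := small_nat m0.
    pose a : R := E2 (- k%:R) / ln 2.
    have a0 : 0 < a by rewrite divr_gt0 ?E2_gt0 ?ln2_gt0.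
    have ak : E2 (- k%:R : R) <= E2 (1 - k%:R) by rewrite ler_E2; lra.
    have am : a < Num.min d e by rewrite /a ltr_pdivrMr ?ln2_gt0 //; apply: le_lt_trans hk.
    move: am; rewrite lt_min => /andP[ad ae].
    pose th : R := E2 (- a).
    have ht : 0 < th < 1 by apply: th_in.
    have Vth : V th.
      apply: hd; have := near1 a0; rewrite -/th; move: ht => /andP[_ t1].
      by move=> h; apply/andP; split => //; lra.
    apply: le_ereal_sup_tmp; exists (g th); first by exists th.
    rewrite hg // -EFinB lee_fin; have := @P3 R k k1; rewrite -/a -/th; lra.
Qed.
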